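(* Let $A$ be a semilattice of groups and $G$ a group. For any admissible extension $A\overset{i}{\to}U\overset{j}{\to}G$ of $A$ by $G$ there exists a twisted partial action $\Theta$ of $G$ on $A$ such that $U$ is equivalent (as an extension of $A$ by $G$) to the crossed product $A*_\Theta G$, regarded as an extension of $A$ by $G$ via $a\mapsto a\delta_1$ and $a\delta_x\mapsto x$.
   Context: A semilattice of groups is an inverse semigroup $A$ whose idempotents are central; for $e\in E(A)$ let $A_e=\{a\in A: aa^{-1}=a^{-1}a=e\}$, so $A=\bigsqcup_{e\in E(A)}A_e$. For an inverse semigroup $S$, $\le$ is the natural partial order, $\sigma$ the minimum group congruence ($(s,t)\in\sigma$ iff $es=et$ for some $e\in E(S)$), $S$ is $E$-unitary if $e\le s$, $e\in E(S)$ imply $s\in E(S)$. An extension of $A$ by an inverse semigroup $S$ (Lausch) is an inverse semigroup $U$ with a monomorphism $i:A\to U$ and an idempotent-separating epimorphism $\pi:U\to S$ with $i(A)=\pi^{-1}(E(S))$. A transversal of $\pi$ is a map $\rho:S\to U$ with $\pi\circ\rho=\mathrm{id}_S$ and $\rho(E(S))\subseteq E(U)$; it is order-preserving if $s\le t$ implies $\rho(s)\le\rho(t)$. An extension of $A$ by a group $G$ is an inverse semigroup $U$ with a monomorphism $i:A\to U$ and an epimorphism $j:U\to G$ with $i(A)=j^{-1}(1)$. Two such extensions $(U,i,j)$, $(U',i',j')$ are equivalent if there is an isomorphism $\mu:U\to U'$ with $\mu\circ i=i'$ and $j'\circ\mu=j$. The extension is admissible if there exist an inverse semigroup $S$ and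 epimorphisms $\pi:U\to S$, $\kappa:S\to G$ such that $A\overset{i}{\to}U\overset{\pi}{\to}S$ is an extension of $A$ by $S$, $j=\kappa\circ\pi$, and $\pi$ has an order-preserving transversal. A multiplier of a semigroup $T$ is a pair $(L,R)$ of maps $T\to T$ with $L(st)=L(s)t$, $R(st)=sR(t)$, $sL(t)=R(s)t$; one writes $ws=L(s)$, $sw=R(s)$ for $w=(L,R)$. Multipliers form a monoid $\mathcal M(T)$ with $(L,R)(L',R')=(L\circ L',R'\circ R)$; $\mathcal U(\mathcal M(T))$ is its unit group. A twisted partial action of a group $G$ on a semigroup $T$ is a pair $\Theta=(\theta,w)$, where $\theta=\{\theta_x:D_{x^{-1}}\to D_x\}_{x\in G}$ are isomorphisms between nonempty ideals of $T$ and $w=\{w_{x,y}\in\mathcal U(\mathcal M(D_xD_{xy}))\}_{x,y\in G}$, such that: (i) $D_x^2=D_x$, $D_xD_y=D_yD_x$; (ii) $D_1=T$, $\theta_1=\mathrm{id}_T$; (iii) $\theta_x(D_{x^{-1}}D_y)=D_xD_{xy}$; (iv) $\theta_x(\theta_y(s))=w_{x,y}\theta_{xy}(s)w_{x,y}^{-1}$ for $s\in D_{y^{-1}}D_{y^{-1}x^{-1}}$; (v) $w_{1,x}$ and $w_{x,1}$ are the identity multiplier of $D_x$; (vi) $\theta_x(sw_{y,z})w_{x,yz}=\theta_x(s)w_{x,y}w_{xy,z}$ for $s\in D_{x^{-1}}D_yD_{yz}$. The crossed product is $T*_\Theta G=\{s\delta_x: x\in G, s\in D_x\}$ with product $s\delta_x\cdot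 t\delta_y=\theta_x(\theta_x^{-1}(s)t)w_{x,y}\delta_{xy}$ (an associative semigroup; an inverse semigroup when $T$ is inverse). *)

(* Defs.v *)
Set Implicit Arguments.
Unset Strict Implicit.

(* The inverse is
   carried as data; uniqueness is an axiom, so it is determined. *)
Record InvSemigroup := {
  car :> Type;
  smul : car -> car -> car;
  sinv : car -> car;
  smul_assoc : forall a b c, smul a (smul b c) = smul (smul a b) c;
  sinv_l : forall a, smul (smul a (sinv a)) a = a;
  sinv_r : forall a, smul (smul (sinv a) a) (sinv a) = sinv a;
  sinv_uniq : forall a b, smul (smul a b) a = a -> smul (smul b a) b = b ->
                          b = sinv a
}.

Record Group := {
  gcar :> Type;
  gmul : gcar -> gcar -> gcar;
  gone : gcar;
  ginv : gcar -> gcar;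
  gmul_assoc : forall x y z, gmul x (gmul y z) = gmul (gmul x y) z;
  gmul_1l : forall x, gmul gone x = x;
  gmul_1r : forall x, gmul x gone = x;
  gmul_Vl : forall x, gmul (ginv x) x = gone;
  gmul_Vr : forall x, gmul x (ginv x) = gone
}.

Definition is_idem (S : InvSemigroup) (e : S) : Prop := smul e e = e.

Definition semilattice_of_groups (A : InvSemigroup) : Prop :=
  forall e a : A, is_idem e -> smul e a = smul a e.

Definition nat_le (S : InvSemigroup) (s t : S) : Prop :=
  exists e : S, is_idem e /\ s = smul e t.

Definition is_hom (S T : InvSemigroup) (f : S -> T) : Prop :=
  forall a b, f (smul a b) = smul (f a) (f b).

Definition is_ghom (S : InvSemigroup) (G : Group) (f : S -> G) : Prop :=
  forall a b, f (smul a b) = gmul (f a) (f b).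

Definition injective (X Y : Type) (f : X -> Y) : Prop :=
  forall a b, f a = f b -> a = b.

Definition surjective (X Y : Type) (f : X -> Y) : Prop :=
  forall y, exists x, f x = y.

Definition idempotent_separating (S T : InvSemigroup) (f : S -> T) : Prop :=
  forall e e' : S, is_idem e -> is_idem e' -> f e = f e' -> e = e'.

Definition is_extension (A U S : InvSemigroup) (i : A -> U) (pi : U -> S)
  : Prop :=
  (is_hom i /\ injective i) /\
  (is_hom pi /\ surjective pi /\ idempotent_separating pi) /\
  (forall u : U, (exists a, u = i a) <-> is_idem (pi u)).

Definition is_group_extension (A U : InvSemigroup) (G : Group)
  (i : A -> U) (j : U -> G) : Prop :=
  (is_hom i /\ injective i) /\
  (is_ghom j /\ surjective j) /\
  (forall u : U, (exists a, u = i a) <-> j u = gone G).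

Definition order_preserving_transversal (S U : InvSemigroup)
  (pi : U -> S) (rho : S -> U) : Prop :=
  (forall s, pi (rho s) = s) /\
  (forall s, is_idem s -> is_idem (rho s)) /\
  (forall s t, nat_le s t -> nat_le (rho s) (rho t)).

Definition admissible (A U : InvSemigroup) (G : Group)
  (i : A -> U) (j : U -> G) : Prop :=
  exists (S : InvSemigroup) (pi : U -> S) (kappa : S -> G),
    is_extension i pi /\
    (is_ghom kappa /\ surjective kappa) /\
    (forall u, j u = kappa (pi u)) /\
    exists rho : S -> U, order_preserving_transversal pi rho.

Definition setprod (T : InvSemigroup) (P Q : T -> Prop) : T -> Prop :=
  fun c => exists a b, P a /\ Q b /\ c = smul a b.

Definition set_eq (T : Type) (P Q : T -> Prop) : Prop :=
  forall c, P c <-> Q c.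

Definition is_ideal (T : InvSemigroup) (P : T -> Prop) : Prop :=
  (exists a, P a) /\ (forall a b, P a -> P (smul a b) /\ P (smul b a)).

(* (L,R) is a multiplier of the subsemigroup I: w s = L s, s w = R s *)
Definition is_multiplier (T : InvSemigroup) (I : T -> Prop) (L R : T -> T)
  : Prop :=
  (forall s, I s -> I (L s) /\ I (R s)) /\
  (forall s t, I s -> I t ->
     L (smul s t) = smul (L s) t /\
     R (smul s t) = smul s (R t) /\
     smul s (L t) = smul (R s) t).

(* (L,R) is a unit of M(I) with inverse (L',R'); product
   (L,R)(L',R') = (L o L', R' o R), identity (id,id). *)
Definition is_unit_multiplier (T : InvSemigroup) (I : T -> Prop)
  (L R L' R' : T -> T) : Prop :=
  is_multiplier I L R /\ is_multiplier I L' R' /\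
  (forall s, I s -> L (L' s) = s /\ R' (R s) = s /\
                    L' (L s) = s /\ R (R' s) = s).

(* theta x : D_{x^{-1}} -> D_x, with inverse map thetainv x : D_x -> D_{x^{-1}};
   w_{x,y} = (wL x y, wR x y) with inverse multiplier (wiL x y, wiR x y). *)
Record TwistedPartialAction (G : Group) (T : InvSemigroup) := {
  D : G -> T -> Prop;
  theta : G -> T -> T;
  thetainv : G -> T -> T;
  wL : G -> G -> T -> T;
  wR : G -> G -> T -> T;
  wiL : G -> G -> T -> T;
  wiR : G -> G -> T -> T;
  D_ideal : forall x, is_ideal (D x);
  D_sq : forall x, set_eq (setprod (D x) (D x)) (D x);
  D_comm : forall x y, set_eq (setprod (D x) (D y)) (setprod (D y) (D x));
  D_one : forall a, D (gone G) a;
  theta_one : forall a, theta (gone G) a = a;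
  theta_maps : forall x a, D (ginv x) a -> D x (theta x a);
  thetainv_maps : forall x a, D x a -> D (ginv x) (thetainv x a);
  theta_K : forall x a, D (ginv x) a -> thetainv x (theta x a) = a;
  thetainv_K : forall x a, D x a -> theta x (thetainv x a) = a;
  theta_mul : forall x a b, D (ginv x) a -> D (ginv x) b ->
                theta x (smul a b) = smul (theta x a) (theta x b);
  theta_img : forall x y,
    set_eq (fun c => exists a, setprod (D (ginv x)) (D y) a /\ c = theta x a)
           (setprod (D x) (D (gmul x y)));
  w_unit : forall x y, is_unit_multiplier (setprod (D x) (D (gmul x y)))
                         (wL x y) (wR x y) (wiL x y) (wiR x y);
  (* (iv): theta_x(theta_y s) = w_{x,y} theta_{xy}(s) w_{x,y}^{-1} *)
  theta_comp : forall x y s,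
    setprod (D (ginv y)) (D (gmul (ginv y) (ginv x))) s ->
    theta x (theta y s) = wiR x y (wL x y (theta (gmul x y) s));
  w_1x : forall x a, D x a -> wL (gone G) x a = a /\ wR (gone G) x a = a;
  w_x1 : forall x a, D x a -> wL x (gone G) a = a /\ wR x (gone G) a = a;
  (* (vi): theta_x(s w_{y,z}) w_{x,yz} = theta_x(s) w_{x,y} w_{xy,z} *)
  cocycle : forall x y z s,
    setprod (setprod (D (ginv x)) (D y)) (D (gmul y z)) s ->
    wR x (gmul y z) (theta x (wR y z s)) =
    wR (gmul x y) z (wR x y (theta x s))
}.

(* Crossed product T *_Theta G, represented inside T * G as the pairs (s,x)
   with s in D_x (s delta_x); its product:
   s d_x . t d_y = theta_x(theta_x^{-1}(s) t) w_{x,y} d_{xy}. *)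
Definition in_crossed_product (G : Group) (T : InvSemigroup)
  (Th : TwistedPartialAction G T) (p : T * G) : Prop :=
  D Th (snd p) (fst p).

Definition cp_mul (G : Group) (T : InvSemigroup)
  (Th : TwistedPartialAction G T) (p q : T * G) : T * G :=
  let (s, x) := p in let (t, y) := q in
  (wR Th x y (theta Th x (smul (thetainv Th x s) t)), gmul x y).

(* U is equivalent, as an extension of A by G, to A *_Theta G with
   i'(a) = a d_1 and j'(a d_x) = x: an isomorphism mu : U -> A *_Theta G
   with mu o i = i' and j' o mu = j. *)
Definition equivalent_to_crossed_product (A U : InvSemigroup) (G : Group)
  (i : A -> U) (j : U -> G) (Th : TwistedPartialAction G A) : Prop :=
  exists mu : U -> A * G,
    injective mu /\
    (forall p, (exists u, mu u = p) <-> in_crossed_product Th p) /\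
    (forall u v, mu (smul u v) = cp_mul Th (mu u) (mu v)) /\
    (forall a, mu (i a) = (a, gone G)) /\
    (forall u, snd (mu u) = j u).

(* Main.v *)
Require Import Defs.
From Stdlib Require Import ClassicalEpsilon Setoid Morphisms.

Set Implicit Arguments.
Unset Strict Implicit.
Notation "x ⋅ y" := (smul x y) (at level 40, left associativity).
Notation "x ⁻" := (sinv x) (at level 2, left associativity, format "x ⁻").

Ltac assoc := repeat rewrite smul_assoc.

Ltac srw H :=
  let H1 := fresh "H1" in let H2 := fresh "H2" in
  pose proof H as H1; repeat rewrite smul_assoc in H1;
  match type of H1 with ?L = ?R =>
    assert (H2 : forall p, p ⋅ L = p ⋅ R) by (let p := fresh in intro p; rewrite H1; reflexivity)
  end;
  repeat setoid_rewrite smul_assoc in H2;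
  assoc; first [rewrite H2 | rewrite H1]; clear H1 H2.

Ltac aexact H := let H1 := fresh "H1" in pose proof H as H1; repeat rewrite smul_assoc in H1; assoc; exact H1.
Ltac aeq := assoc; reflexivity.

Section Gen.
Variable S : InvSemigroup.
Implicit Types a b c e f g : S.

Lemma idem_inv e : e ⋅ e = e -> e⁻ = e.
Proof. intro H. symmetry. apply sinv_uniq; rewrite !H; auto. Qed.

Lemma inv_inv a : a⁻⁻ = a.
Proof. symmetry. apply sinv_uniq. apply sinv_r. apply sinv_l. Qed.

Lemma idem_comm e f : e ⋅ e = e -> f ⋅ f = f -> e ⋅ f = f ⋅ e.
Proof.
  intros He Hf.
  assert (gen : forall e f, e ⋅ e = e -> f ⋅ f = f -> e ⋅ f ⋅ (e ⋅ f) = e ⋅ f).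
  { clear e f He Hf. intros e f He Hf.
  set (x := (e ⋅ f)⁻).
  assert (Hx : f ⋅ x ⋅ e = x).
  { apply sinv_uniq.
    - pose proof (sinv_l (e ⋅ f)). fold x in H.
      srw He. srw Hf. srw H. auto.
    - pose proof (sinv_r (e ⋅ f)). fold x in H. 
      srw He. srw Hf. srw H. auto. }
  assert (Hxi : x ⋅ x = x).
  { rewrite <- Hx at 1. rewrite <- Hx at 2. 
    pose proof (sinv_r (e ⋅ f)). fold x in H. srw H. exact Hx. }
  assert (Hef : e ⋅ f = x).
  { rewrite <- (idem_inv Hxi). unfold x. rewrite inv_inv. auto. }
  rewrite Hef; exact Hxi. }
  pose proof (gen e f He Hf) as Hefi. pose proof (gen f e Hf He) as Hfei.
  transitivity ((e ⋅ f)⁻).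
  - symmetry. apply idem_inv. exact Hefi.
  - symmetry. apply sinv_uniq.
    + srw Hf. srw He. aexact Hefi.
    + srw He. srw Hf. aexact Hfei.
Qed.

Lemma idem_rr a : a ⋅ a⁻ ⋅ (a ⋅ a⁻) = a ⋅ a⁻.
Proof. srw (sinv_l a). auto. Qed.
Lemma idem_ll a : a⁻ ⋅ a ⋅ (a⁻ ⋅ a) = a⁻ ⋅ a.
Proof. srw (sinv_r a). auto. Qed.

Lemma inv_mul a b : (a ⋅ b)⁻ = b⁻ ⋅ a⁻.
Proof.
  symmetry. apply sinv_uniq.
  - srw (idem_comm (idem_rr b) (idem_ll a)). srw (sinv_l a). srw (sinv_l b). auto.
  - srw (idem_comm (idem_ll a) (idem_rr b)). srw (sinv_r b). srw (sinv_r a). auto.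
Qed.

Lemma conj_idem a e : e ⋅ e = e -> a ⋅ e ⋅ a⁻ ⋅ (a ⋅ e ⋅ a⁻) = a ⋅ e ⋅ a⁻.
Proof. intro He. srw (idem_comm He (idem_ll a)). srw He. srw (sinv_l a). auto. Qed.

Lemma idem_mul e f : e ⋅ e = e -> f ⋅ f = f -> e ⋅ f ⋅ (e ⋅ f) = e ⋅ f.
Proof. intros He Hf. srw (idem_comm Hf He). srw He. srw Hf. auto. Qed.
End Gen.

Lemma hom_inv (S T : InvSemigroup) (f : S -> T) : is_hom f -> forall a, f (a⁻) = (f a)⁻.
Proof.
  intros Hf a. apply sinv_uniq; rewrite <- !Hf.
  - rewrite sinv_l. auto.
  - rewrite sinv_r. auto.
Qed.

Lemma hom_idem (S T : InvSemigroup) (f : S -> T) : is_hom f -> forall e, e ⋅ e = e -> f e ⋅ f e = f e.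
Proof. intros Hf e He. rewrite <- Hf, He. auto. Qed.

Section Grp.
Variable G : Group.
Lemma g_cancel (x y : G) : gmul (gmul x y) x = x -> y = ginv x.
Proof.
  intro H.
  assert (y = gmul (gmul (ginv x) (gmul (gmul x y) x)) (ginv x)).
  { rewrite !gmul_assoc, gmul_Vl, gmul_1l, <- !gmul_assoc, gmul_Vr, gmul_1r. auto. }
  rewrite H in H0. rewrite <- gmul_assoc, gmul_Vr, gmul_1r in H0. exact H0.
Qed.
Lemma ginv_mul (x y : G) : ginv (gmul x y) = gmul (ginv y) (ginv x).
Proof.
  symmetry. apply g_cancel.
  rewrite <- !gmul_assoc. rewrite (gmul_assoc (ginv x) x), gmul_Vl, gmul_1l, (gmul_assoc y (ginv y)), gmul_Vr, gmul_1l. auto.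
Qed.
Lemma ginv_inv (x : G) : ginv (ginv x) = x.
Proof. symmetry. apply g_cancel. rewrite gmul_Vl, gmul_1l. auto. Qed.
Lemma ginv_one : ginv (gone G) = gone G.
Proof. symmetry. apply g_cancel. rewrite !gmul_1l. auto. Qed.
End Grp.

Lemma ghom_inv (S : InvSemigroup) (G : Group) (f : S -> G) : is_ghom f -> forall a, f (a⁻) = ginv (f a).
Proof. intros Hf a. apply g_cancel. rewrite <- !Hf, sinv_l. auto. Qed.
Lemma ghom_idem (S : InvSemigroup) (G : Group) (f : S -> G) : is_ghom f -> forall e, e ⋅ e = e -> f e = gone G.
Proof.
  intros Hf e He. assert (H : gmul (f e) (f e) = f e) by (rewrite <- Hf, He; auto).
  assert (H2 : gmul (ginv (f e)) (gmul (f e) (f e)) = gmul (ginv (f e)) (f e)) by (rewrite H; auto).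
  rewrite gmul_assoc, gmul_Vl, gmul_1l in H2. exact H2.
Qed.


Section Main.
Variables (A U S : InvSemigroup) (G : Group) (i : A -> U) (j : U -> G)
  (pi : U -> S) (kappa : S -> G) (rho : S -> U) (a0 : A).
Hypothesis HA : semilattice_of_groups A.
Hypothesis Hi : is_hom i.
Hypothesis Hinj : injective i.
Hypothesis Hj : is_ghom j.
Hypothesis HiA : forall u, (exists a, u = i a) <-> j u = gone G.
Hypothesis Hpi : is_hom pi.
Hypothesis Hsep : idempotent_separating pi.
Hypothesis HpiA : forall u, (exists a, u = i a) <-> is_idem (pi u).
Hypothesis Hjk : forall u, j u = kappa (pi u).
Hypothesis Hrho1 : forall s, pi (rho s) = s.
Hypothesis Hrho2 : forall s, is_idem s -> is_idem (rho s).
Hypothesis Hrho3 : forall s t, nat_le s t -> nat_le (rho s) (rho t).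

Notation "1" := (gone G).
Notation "x * y" := (gmul x y).

Lemma A_cliff (a : A) : a ⋅ a⁻ = a⁻ ⋅ a.
Proof.
  assert (E1 : a ⋅ a⁻ = a⁻ ⋅ a ⋅ (a ⋅ a⁻)).
  { transitivity (a ⋅ a⁻ ⋅ a ⋅ a⁻). rewrite sinv_l. auto.
    transitivity (a ⋅ (a⁻ ⋅ a) ⋅ a⁻). aeq. rewrite <- (HA a (idem_ll a)). aeq. }
  assert (E2 : a⁻ ⋅ a = a ⋅ a⁻ ⋅ (a⁻ ⋅ a)).
  { transitivity (a⁻ ⋅ (a ⋅ a⁻ ⋅ a)). rewrite sinv_l. auto.
    transitivity (a⁻ ⋅ (a ⋅ a⁻) ⋅ a). aeq. rewrite <- (HA (a⁻) (idem_rr a)). aeq. }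
  transitivity (a⁻ ⋅ a ⋅ (a ⋅ a⁻)). exact E1. rewrite (idem_comm (idem_ll a) (idem_rr a)). symmetry. exact E2.
Qed.

Definition inA (u : U) := j u = 1.

Lemma inA_ex u : inA u -> exists a, u = i a.
Proof. intro H. apply HiA. exact H. Qed.
Lemma i_inA a : inA (i a).
Proof. apply HiA. eauto. Qed.

Lemma idem_inA e : e ⋅ e = e -> inA e.
Proof. intro H. apply (ghom_idem Hj H). Qed.

Lemma central u e : inA u -> e ⋅ e = e -> e ⋅ u = u ⋅ e.
Proof.
  intros Hu He. destruct (inA_ex Hu) as [a ->]. destruct (inA_ex (idem_inA He)) as [b ->].
  assert (Hb : b ⋅ b = b). { apply Hinj. rewrite Hi. exact He. }
  rewrite <- !Hi. rewrite HA; auto.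
Qed.

Lemma cliff u : inA u -> u ⋅ u⁻ = u⁻ ⋅ u.
Proof. intro Hu. destruct (inA_ex Hu) as [a ->]. rewrite <- (hom_inv Hi), <- !Hi, A_cliff. auto. Qed.

Lemma jinv u : j (u⁻) = ginv (j u).
Proof. apply ghom_inv. exact Hj. Qed.

Lemma inA_mul u v : inA u -> inA v -> inA (u ⋅ v).
Proof. unfold inA. intros. rewrite Hj, H, H0, gmul_1l. auto. Qed.
Lemma inA_inv u : inA u -> inA (u⁻).
Proof. unfold inA. intros. rewrite jinv, H, ginv_one. auto. Qed.

Definition N u := rho (pi u).

Lemma piN u : pi (N u) = pi u.
Proof. apply Hrho1. Qed.
Lemma jN u : j (N u) = j u.
Proof. rewrite !Hjk, piN. auto. Qed.
Lemma NN u : N (N u) = N u.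
Proof. unfold N at 1. rewrite piN. auto. Qed.

Lemma sepU e f : e ⋅ e = e -> f ⋅ f = f -> pi e = pi f -> e = f.
Proof. intros; apply Hsep; auto. Qed.

Lemma Nrg u : N u ⋅ (N u)⁻ = u ⋅ u⁻.
Proof.
  apply sepU; try apply idem_rr. rewrite !Hpi, !(hom_inv Hpi), piN. auto.
Qed.
Lemma Ndm u : (N u)⁻ ⋅ N u = u⁻ ⋅ u.
Proof.
  apply sepU; try apply idem_ll. rewrite !Hpi, !(hom_inv Hpi), piN. auto.
Qed.
Lemma NuL u : u ⋅ u⁻ ⋅ N u = N u.
Proof. rewrite <- Nrg. apply sinv_l. Qed.
Lemma NuR u : N u ⋅ u⁻ ⋅ u = N u.
Proof. rewrite <- smul_assoc, <- Ndm. assoc. apply sinv_l. Qed.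

Lemma idem_pi_inA u : is_idem (pi u) -> inA u.
Proof. intro H. apply HiA. apply HpiA. exact H. Qed.
Lemma inA_pi_idem u : inA u -> pi u ⋅ pi u = pi u.
Proof. intro H. apply HpiA. apply HiA. exact H. Qed.

Lemma piEq u v : j u = j v -> u ⋅ u⁻ = v ⋅ v⁻ -> pi u = pi v.
Proof.
  intros Hj1 Hr.
  assert (Hh : pi u⁻ ⋅ pi v ⋅ (pi u⁻ ⋅ pi v) = pi u⁻ ⋅ pi v).
  { assert (X : inA (u⁻ ⋅ v)) by (unfold inA; rewrite Hj, jinv, Hj1, gmul_Vl; auto).
    pose proof (inA_pi_idem X) as Y. rewrite Hpi in Y. exact Y. }
  assert (Hf : pi v⁻ ⋅ pi u ⋅ (pi v⁻ ⋅ pi u) = pi v⁻ ⋅ pi u).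
  { assert (X : inA (v⁻ ⋅ u)) by (unfold inA; rewrite Hj, jinv, Hj1, gmul_Vl; auto).
    pose proof (inA_pi_idem X) as Y. rewrite Hpi in Y. exact Y. }
  rewrite !(hom_inv Hpi) in Hh, Hf.
  assert (Hr' : pi u ⋅ (pi u)⁻ = pi v ⋅ (pi v)⁻) by (rewrite <- !(hom_inv Hpi), <- !Hpi, Hr; auto).
  set (s := pi u) in *. set (t := pi v) in *.
  assert (E1 : s = t ⋅ (t⁻ ⋅ s)). { rewrite <- (sinv_l s) at 1. rewrite Hr'. aeq. }
  assert (E2 : t = s ⋅ (s⁻ ⋅ t)). { rewrite <- (sinv_l t) at 1. rewrite <- Hr'. aeq. }
  assert (E3 : t ⋅ (s⁻ ⋅ t) = t).
  { rewrite E2 at 1. srw Hh. aexact (eq_sym E2). }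
  transitivity (t ⋅ (t⁻ ⋅ s)). exact E1.
  transitivity (t ⋅ (s⁻ ⋅ t) ⋅ (t⁻ ⋅ s)). rewrite E3. auto.
  transitivity (t ⋅ ((t⁻ ⋅ s) ⋅ (s⁻ ⋅ t))). rewrite <- (idem_comm Hh Hf). aeq.
  transitivity (s ⋅ (s⁻ ⋅ t)). rewrite smul_assoc, <- E1. auto.
  symmetry. exact E2.
Qed.

Lemma NeqR u v : j u = j v -> u ⋅ u⁻ = v ⋅ v⁻ -> N u = N v.
Proof. intros. unfold N. rewrite (piEq H H0). auto. Qed.

Lemma NeqD u v : j u = j v -> u⁻ ⋅ u = v⁻ ⋅ v -> N u = N v.
Proof.
  intros H1 H2. unfold N.
  assert (E : pi (u⁻) = pi (v⁻)). { apply piEq. rewrite !jinv, H1. auto. rewrite !inv_inv. auto. }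
  rewrite !(hom_inv Hpi) in E. rewrite <- (inv_inv (pi u)), E, inv_inv. auto.
Qed.

Lemma N_idem e : e ⋅ e = e -> N e = e.
Proof. intro He. apply sepU. apply Hrho2. apply inA_pi_idem. apply idem_inA. auto. auto. apply piN. Qed.

Lemma N_left e u : e ⋅ e = e -> N (e ⋅ u) = e ⋅ N u.
Proof.
  intro He.
  assert (Hle : nat_le (pi (e ⋅ u)) (pi u)).
  { exists (pi e). split. unfold is_idem. rewrite <- Hpi, He. auto. apply Hpi. }
  destruct (Hrho3 Hle) as [g [Hg HX]]. fold (N (e ⋅ u)) in HX. fold (N u) in HX. unfold is_idem in Hg.
  assert (R1 : N (e ⋅ u) ⋅ (N (e ⋅ u))⁻ = e ⋅ (u ⋅ u⁻)).
  { rewrite Nrg, inv_mul, (idem_inv He). srw (idem_comm (idem_rr u) He). srw He. auto. }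
  assert (R2 : N (e ⋅ u) ⋅ (N (e ⋅ u))⁻ = g ⋅ (u ⋅ u⁻)).
  { rewrite HX, inv_mul, (idem_inv Hg). rewrite <- (Nrg u). srw (idem_comm (idem_rr (N u)) Hg). srw Hg. auto. }
  symmetry. rewrite <- (NuL u). transitivity (e ⋅ (u ⋅ u⁻) ⋅ N u). aeq.
  rewrite <- R1, R2. srw (NuL u). symmetry. exact HX.
Qed.

Lemma N_right e u : e ⋅ e = e -> N (u ⋅ e) = N u ⋅ e.
Proof.
  intro He.
  assert (E1 : N u ⋅ e = N (N u ⋅ e)).
  { assert (Eq : N u ⋅ e = N u ⋅ e ⋅ (N u)⁻ ⋅ N u).
    { symmetry. srw (Ndm u). srw (idem_comm He (idem_ll u)). srw (NuR u). auto. }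
    rewrite Eq. rewrite (N_left _ (conj_idem (N u) He)). rewrite NN. auto. }
  rewrite E1. apply NeqD. rewrite !Hj, jN. auto.
  rewrite !inv_mul, (idem_inv He). srw (Ndm u). auto.
Qed.

Lemma NuL' p u : p ⋅ (u ⋅ u⁻) ⋅ N u = p ⋅ N u.
Proof. assoc. rewrite <- (smul_assoc p u). rewrite <- smul_assoc. rewrite NuL. auto. Qed.

Definition Er x e := exists u, j u = x /\ u ⋅ u⁻ = e.
Definition Ed x f := exists u, j u = x /\ u⁻ ⋅ u = f.

Definition Nr x e := N (epsilon (inhabits (i a0)) (fun u => j u = x /\ u ⋅ u⁻ = e)).
Definition Nd x f := N (epsilon (inhabits (i a0)) (fun u => j u = x /\ u⁻ ⋅ u = f)).

Lemma NrE x e u : j u = x -> u ⋅ u⁻ = e -> Nr x e = N u.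
Proof.
  intros H1 H2. unfold Nr.
  destruct (epsilon_spec (inhabits (i a0)) (fun u => j u = x /\ u ⋅ u⁻ = e)) as [E1 E2]. eauto.
  apply NeqR; congruence.
Qed.
Lemma NdE x f u : j u = x -> u⁻ ⋅ u = f -> Nd x f = N u.
Proof.
  intros H1 H2. unfold Nd.
  destruct (epsilon_spec (inhabits (i a0)) (fun u => j u = x /\ u⁻ ⋅ u = f)) as [E1 E2]. eauto.
  apply NeqD; congruence.
Qed.

Section ErFacts.
Variables (x : G) (e : U).
Hypothesis He : Er x e.
Lemma Er_idem : e ⋅ e = e.
Proof. destruct He as [u [_ <-]]. apply idem_rr. Qed.
Lemma Nr_j : j (Nr x e) = x.
Proof. destruct He as [u [H1 H2]]. rewrite (NrE H1 H2), jN. auto. Qed.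
Lemma Nr_rg : Nr x e ⋅ (Nr x e)⁻ = e.
Proof. destruct He as [u [H1 H2]]. rewrite (NrE H1 H2), Nrg. auto. Qed.
Lemma Nr_N : N (Nr x e) = Nr x e.
Proof. destruct He as [u [H1 H2]]. rewrite (NrE H1 H2), NN. auto. Qed.
End ErFacts.
Section EdFacts.
Variables (x : G) (f : U).
Hypothesis Hf : Ed x f.
Lemma Ed_idem : f ⋅ f = f.
Proof. destruct Hf as [u [_ <-]]. apply idem_ll. Qed.
Lemma Nd_j : j (Nd x f) = x.
Proof. destruct Hf as [u [H1 H2]]. rewrite (NdE H1 H2), jN. auto. Qed.
Lemma Nd_dm : (Nd x f)⁻ ⋅ Nd x f = f.
Proof. destruct Hf as [u [H1 H2]]. rewrite (NdE H1 H2), Ndm. auto. Qed.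
Lemma Nd_N : N (Nd x f) = Nd x f.
Proof. destruct Hf as [u [H1 H2]]. rewrite (NdE H1 H2), NN. auto. Qed.
End EdFacts.

Lemma NrE' u : Nr (j u) (u ⋅ u⁻) = N u.
Proof. apply NrE; auto. Qed.
Lemma NdE' u : Nd (j u) (u⁻ ⋅ u) = N u.
Proof. apply NdE; auto. Qed.

Lemma Er_of u : Er (j u) (u ⋅ u⁻).
Proof. exists u; auto. Qed.
Lemma Ed_of u : Ed (j u) (u⁻ ⋅ u).
Proof. exists u; auto. Qed.

Lemma Er_Ed x e : Er x e <-> Ed (ginv x) e.
Proof.
  split; intros [u [H1 H2]]; exists u⁻; rewrite jinv, H1, ?ginv_inv, ?inv_inv; auto.
Qed.

Lemma Er_down x e f : Er x e -> f ⋅ f = f -> Er x (f ⋅ e).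
Proof.
  intros [u [H1 H2]] Hf. exists (f ⋅ u). split.
  rewrite Hj, (idem_inA Hf), gmul_1l; auto.
  rewrite inv_mul, (idem_inv Hf). srw H2. rewrite <- H2. rewrite <- smul_assoc.
  rewrite (idem_comm (idem_rr u) Hf). srw Hf. auto.
Qed.
Lemma Ed_down x e f : Ed x e -> f ⋅ f = f -> Ed x (e ⋅ f).
Proof.
  intros [u [H1 H2]] Hf. exists (u ⋅ f). split.
  rewrite Hj, (idem_inA Hf), gmul_1r; auto.
  rewrite inv_mul, (idem_inv Hf). srw H2. rewrite <- H2.
  rewrite (idem_comm Hf (idem_ll u)). srw Hf. auto.
Qed.

Lemma Nr_left x e f e' : Er x e -> f ⋅ f = f -> e' = f ⋅ e -> Nr x e' = f ⋅ Nr x e.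
Proof.
  intros HE Hf ->. rewrite <- (Nr_N HE). rewrite <- (N_left _ Hf).
  apply NrE. rewrite Hj, (Nr_j HE), (idem_inA Hf), gmul_1l. auto.
  rewrite inv_mul, (idem_inv Hf). srw (Nr_rg HE).
  rewrite <- smul_assoc, (idem_comm (Er_idem HE) Hf). srw Hf. auto.
Qed.
Lemma Nd_right x f e f' : Ed x f -> e ⋅ e = e -> f' = f ⋅ e -> Nd x f' = Nd x f ⋅ e.
Proof.
  intros HE He ->. rewrite <- (Nd_N HE). rewrite <- (N_right _ He).
  apply NdE. rewrite Hj, (Nd_j HE), (idem_inA He), gmul_1r. auto.
  rewrite inv_mul, (idem_inv He). srw (Nd_dm HE).
  rewrite (idem_comm He (Ed_idem HE)). srw He. auto.
Qed.

Lemma Nd_P x f : Ed x f -> Nd x f ⋅ f = Nd x f.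
Proof. intro H. rewrite <- (Nd_dm H) at 2. rewrite smul_assoc. apply sinv_l. Qed.
Lemma Nd_Pi x f : Ed x f -> f ⋅ (Nd x f)⁻ = (Nd x f)⁻.
Proof. intro H. rewrite <- (Nd_dm H) at 1. apply sinv_r. Qed.
Lemma Nr_P x e : Er x e -> e ⋅ Nr x e = Nr x e.
Proof. intro H. rewrite <- (Nr_rg H) at 1. apply sinv_l. Qed.
Lemma Nr_Pi x e : Er x e -> (Nr x e)⁻ ⋅ e = (Nr x e)⁻.
Proof. intro H. rewrite <- (Nr_rg H) at 2. rewrite smul_assoc. apply sinv_r. Qed.

Lemma inA_rr u : inA u -> u ⋅ (u ⋅ u⁻) = u.
Proof. intro H. rewrite (cliff H). rewrite smul_assoc. apply sinv_l. Qed.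
Lemma inA_ll u : inA u -> (u⁻ ⋅ u) ⋅ u = u.
Proof. intro H. rewrite <- (cliff H). apply sinv_l. Qed.

Lemma rg_mul_A u v : inA u -> inA v -> (u ⋅ v) ⋅ (u ⋅ v)⁻ = (v ⋅ v⁻) ⋅ (u ⋅ u⁻).
Proof.
  intros Hu Hv. rewrite inv_mul. transitivity (u ⋅ (v ⋅ v⁻) ⋅ u⁻). aeq.
  rewrite <- (central Hu (idem_rr v)). aeq.
Qed.

Definition DD x (a : A) := Er x (i a ⋅ (i a)⁻).

Lemma D_ideal_l x a b : DD x a -> DD x (a ⋅ b).
Proof.
  unfold DD. intro H. rewrite Hi, rg_mul_A by apply i_inA. apply Er_down; auto. apply idem_rr.
Qed.
Lemma D_ideal_r x a b : DD x a -> DD x (b ⋅ a).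
Proof.
  unfold DD. intro H. rewrite Hi, rg_mul_A by apply i_inA.
  rewrite (idem_comm (idem_rr (i a)) (idem_rr (i b))). apply Er_down; auto. apply idem_rr.
Qed.

Lemma setprod_D x y c : setprod (DD x) (DD y) c <-> DD x c /\ DD y c.
Proof.
  split.
  - intros [a [b [Ha [Hb ->]]]]. split. apply D_ideal_l; auto. apply D_ideal_r; auto.
  - intros [H1 H2]. exists c, (c⁻ ⋅ c). split; auto. split. apply D_ideal_r. auto.
    rewrite smul_assoc. symmetry. apply sinv_l.
Qed.

Lemma D_inv x a : DD (ginv x) a <-> Ed x (i a ⋅ (i a)⁻).
Proof. unfold DD. rewrite Er_Ed, ginv_inv. tauto. Qed.

Definition iinv (u : U) : A := epsilon (inhabits a0) (fun a => i a = u).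
Lemma iinvK u : inA u -> i (iinv u) = u.
Proof.
  intro H. destruct (inA_ex H) as [a Ha]. unfold iinv.
  apply (epsilon_spec (inhabits a0) (fun a => i a = u)). eauto.
Qed.
Lemma iinv_i a : iinv (i a) = a.
Proof. apply Hinj. apply iinvK. apply i_inA. Qed.

Definition th x a := iinv (Nd x (i a ⋅ (i a)⁻) ⋅ i a ⋅ (Nd x (i a ⋅ (i a)⁻))⁻).
Definition thinv x c := iinv ((Nr x (i c ⋅ (i c)⁻))⁻ ⋅ i c ⋅ Nr x (i c ⋅ (i c)⁻)).

Lemma j_conj u v : j (u ⋅ v ⋅ u⁻) = j v -> True. Proof. auto. Qed.

Lemma inA_conj u v : inA v -> inA (u ⋅ v ⋅ u⁻).
Proof. unfold inA. intro H. rewrite !Hj, H, jinv, gmul_1r, gmul_Vr. auto. Qed.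
Lemma inA_conj' u v : inA v -> inA (u⁻ ⋅ v ⋅ u).
Proof. unfold inA. intro H. rewrite !Hj, H, jinv, gmul_1r, gmul_Vl. auto. Qed.

Section Theta.
Variables (x : G) (a : A).
Hypothesis Ha : DD (ginv x) a.
Let P := Nd x (i a ⋅ (i a)⁻).
Let HE : Ed x (i a ⋅ (i a)⁻) := proj1 (D_inv x a) Ha.
Lemma theta_i : i (th x a) = P ⋅ i a ⋅ P⁻.
Proof. apply iinvK. apply inA_conj. apply i_inA. Qed.
Lemma theta_rg : i (th x a) ⋅ (i (th x a))⁻ = P ⋅ P⁻.
Proof.
  rewrite theta_i. rewrite !inv_mul, inv_inv. unfold P. srw (Nd_dm HE).
  srw (inA_rr (i_inA a)). srw (Nd_P HE). auto.
Qed.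
Lemma theta_D : DD x (th x a).
Proof. unfold DD. rewrite theta_rg. rewrite <- (Nd_j HE). apply Er_of. Qed.
End Theta.


Section ThetaInv.
Variables (x : G) (c : A).
Hypothesis Hc : DD x c.
Let Q := Nr x (i c ⋅ (i c)⁻).
Lemma thetainv_i : i (thinv x c) = Q⁻ ⋅ i c ⋅ Q.
Proof. apply iinvK. apply inA_conj'. apply i_inA. Qed.
Lemma thetainv_rg : i (thinv x c) ⋅ (i (thinv x c))⁻ = Q⁻ ⋅ Q.
Proof.
  rewrite thetainv_i. rewrite !inv_mul, inv_inv. unfold Q. srw (Nr_rg Hc).
  srw (inA_rr (i_inA c)). srw (Nr_Pi Hc). auto.
Qed.
Lemma thetainv_D : DD (ginv x) (thinv x c).
Proof. apply D_inv. rewrite thetainv_rg. rewrite <- (Nr_j Hc). apply Ed_of. Qed.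
Lemma theta_thetainv : th x (thinv x c) = c.
Proof.
  apply Hinj. rewrite (theta_i x (thinv x c)). rewrite thetainv_rg.
  assert (E : Nd x (Q⁻ ⋅ Q) = Q).
  { rewrite <- (Nr_j Hc) at 1. unfold Q. rewrite NdE', Nr_N; auto. }
  rewrite E, thetainv_i. unfold Q. srw (Nr_rg Hc). srw (Nr_rg Hc). srw (sinv_l (i c)). srw (inA_rr (i_inA c)). auto.
Qed.
End ThetaInv.

Lemma thetainv_theta x a : DD (ginv x) a -> thinv x (th x a) = a.
Proof.
  intro Ha. pose proof (proj1 (D_inv x a) Ha) as HE.
  pose proof (theta_D Ha) as Ht.
  apply Hinj. rewrite (thetainv_i x (th x a)). rewrite (theta_rg Ha).
  assert (E : Nr x (Nd x (i a ⋅ (i a)⁻) ⋅ (Nd x (i a ⋅ (i a)⁻))⁻) = Nd x (i a ⋅ (i a)⁻)).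
  { rewrite <- (Nd_j HE) at 1. rewrite NrE', Nd_N; auto. }
  rewrite E, (theta_i x a). srw (Nd_dm HE). srw (Nd_dm HE). srw (sinv_l (i a)). srw (inA_rr (i_inA a)). auto.
Qed.

Lemma Ltheta_mul x a b : DD (ginv x) a -> DD (ginv x) b -> th x (a ⋅ b) = th x a ⋅ th x b.
Proof.
  intros Ha Hb. pose proof (proj1 (D_inv x a) Ha) as HEa. pose proof (proj1 (D_inv x b) Hb) as HEb.
  assert (key : Nd x (i b ⋅ (i b)⁻) ⋅ (i a ⋅ (i a)⁻) = Nd x (i a ⋅ (i a)⁻) ⋅ (i b ⋅ (i b)⁻)).
  { transitivity (Nd x ((i a ⋅ (i a)⁻) ⋅ (i b ⋅ (i b)⁻))).
    symmetry. apply Nd_right; auto. apply idem_rr. apply idem_comm; apply idem_rr.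
    apply Nd_right; auto. apply idem_rr. }
  assert (E : (Nd x (i a ⋅ (i a)⁻))⁻ ⋅ Nd x (i b ⋅ (i b)⁻) = (i a ⋅ (i a)⁻) ⋅ (i b ⋅ (i b)⁻)).
  { transitivity ((i a ⋅ (i a)⁻) ⋅ (Nd x (i a ⋅ (i a)⁻))⁻ ⋅ (Nd x (i b ⋅ (i b)⁻) ⋅ (i b ⋅ (i b)⁻))).
    rewrite (Nd_Pi HEa), (Nd_P HEb). auto.
    transitivity ((i a ⋅ (i a)⁻) ⋅ ((Nd x (i a ⋅ (i a)⁻))⁻ ⋅ Nd x (i b ⋅ (i b)⁻)) ⋅ (i b ⋅ (i b)⁻)). aeq.
    assert (Hin : inA ((Nd x (i a ⋅ (i a)⁻))⁻ ⋅ Nd x (i b ⋅ (i b)⁻))).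
    { unfold inA. rewrite Hj, jinv, (Nd_j HEa), (Nd_j HEb), gmul_Vl. auto. }
    rewrite (central Hin (idem_rr (i a))). srw key. srw (Nd_dm HEa). srw (idem_rr (i b)). auto. }
  apply Hinj. rewrite Hi, !theta_i. rewrite Hi, rg_mul_A by apply i_inA.
  rewrite (Nd_right HEb (idem_rr (i a)) eq_refl).
  rewrite key at 1. rewrite inv_mul, (idem_inv (idem_rr (i a))).
  srw E.
  srw (inA_rr (i_inA a)). srw (sinv_l (i b)).
  srw (central (i_inA a) (idem_rr (i b))). srw (sinv_l (i b)).
  srw (eq_sym (central (i_inA b) (idem_rr (i a)))). srw (inA_rr (i_inA a)). auto.
Qed.

Lemma Ltheta_one a : th 1 a = a.
Proof.
  apply Hinj. rewrite theta_i.
  assert (E : Nd 1 (i a ⋅ (i a)⁻) = i a ⋅ (i a)⁻).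
  { rewrite <- (N_idem (idem_rr (i a))) at 2. apply NdE. apply idem_inA, idem_rr.
    rewrite (idem_inv (idem_rr (i a))). apply idem_rr. }
  rewrite E. rewrite (idem_inv (idem_rr (i a))). srw (sinv_l (i a)). srw (inA_rr (i_inA a)). auto.
Qed.

Lemma D_one a : DD 1 a.
Proof. exists (i a). split. apply i_inA. auto. Qed.

Lemma theta_img1 x y a : setprod (DD (ginv x)) (DD y) a -> setprod (DD x) (DD (x * y)) (th x a).
Proof.
  rewrite !setprod_D. intros [Ha Hy]. split. apply theta_D; auto.
  pose proof (proj1 (D_inv x a) Ha) as HE.
  unfold DD. rewrite (theta_rg Ha). destruct Hy as [w [Hw1 Hw2]].
  exists (Nd x (i a ⋅ (i a)⁻) ⋅ w). split. rewrite Hj, (Nd_j HE), Hw1. auto.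
  rewrite inv_mul. srw Hw2. srw (Nd_P HE). auto.
Qed.

Lemma theta_img2 x y c : setprod (DD x) (DD (x * y)) c -> exists a, setprod (DD (ginv x)) (DD y) a /\ c = th x a.
Proof.
  rewrite setprod_D. intros [Hx Hxy]. exists (thinv x c). split.
  - apply setprod_D. split. apply thetainv_D; auto.
    unfold DD. rewrite (thetainv_rg Hx). destruct Hxy as [w [Hw1 Hw2]].
    exists ((Nr x (i c ⋅ (i c)⁻))⁻ ⋅ w). split. rewrite Hj, jinv, (Nr_j Hx), Hw1, gmul_assoc, gmul_Vl, gmul_1l. auto.
    rewrite inv_mul, inv_inv. srw Hw2. srw (Nr_Pi Hx). auto.
  - symmetry. apply theta_thetainv. auto.
Qed.

Section Mult.
Variables (I : A -> Prop) (EI : U -> Prop) (Kf : U -> U).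
Hypothesis HI : forall c, I c <-> EI (i c ⋅ (i c)⁻).
Hypothesis HEI : forall e f, EI e -> f ⋅ f = f -> EI (f ⋅ e).
Hypothesis HK1 : forall e, EI e -> inA (Kf e).
Hypothesis HK2 : forall e, EI e -> Kf e ⋅ (Kf e)⁻ = e.
Hypothesis HK3 : forall e f, EI e -> f ⋅ f = f -> Kf (f ⋅ e) = f ⋅ Kf e.

Definition ML c := iinv (Kf (i c ⋅ (i c)⁻) ⋅ i c).
Definition MR c := iinv (i c ⋅ Kf (i c ⋅ (i c)⁻)).

Lemma ML_i c : I c -> i (ML c) = Kf (i c ⋅ (i c)⁻) ⋅ i c.
Proof. intro H. apply iinvK. apply inA_mul. apply HK1, HI, H. apply i_inA. Qed.
Lemma MR_i c : I c -> i (MR c) = i c ⋅ Kf (i c ⋅ (i c)⁻).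
Proof. intro H. apply iinvK. apply inA_mul. apply i_inA. apply HK1, HI, H. Qed.

Lemma ML_rg c : I c -> i (ML c) ⋅ (i (ML c))⁻ = i c ⋅ (i c)⁻.
Proof.
  intro H. rewrite (ML_i H), inv_mul. pose proof (HI c) as [H1 _]. specialize (H1 H).
  srw (eq_sym (central (HK1 H1) (idem_rr (i c)))).
  srw (HK2 H1). srw (idem_rr (i c)). auto.
Qed.
Lemma MR_rg c : I c -> i (MR c) ⋅ (i (MR c))⁻ = i c ⋅ (i c)⁻.
Proof.
  intro H. rewrite (MR_i H), inv_mul. pose proof (HI c) as [H1 _]. specialize (H1 H).
  srw (HK2 H1). srw (inA_rr (i_inA c)). auto.
Qed.


Lemma M_mult : is_multiplier I ML MR.
Proof.
  split.
  - intros c H. split; apply HI.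
    rewrite (ML_rg H). apply HI, H. rewrite (MR_rg H). apply HI, H.
  - intros s t Hs Ht. pose proof (proj1 (HI s) Hs) as Es. pose proof (proj1 (HI t) Ht) as Et.
    assert (Hst : I (s ⋅ t)). { apply HI. rewrite Hi, rg_mul_A by apply i_inA. apply HEI; auto. apply idem_rr. }
    assert (Hts' : EI ((i s ⋅ (i s)⁻) ⋅ (i t ⋅ (i t)⁻))). { apply HEI; auto. apply idem_rr. }
    assert (Kts : Kf ((i t ⋅ (i t)⁻) ⋅ (i s ⋅ (i s)⁻)) = (i t ⋅ (i t)⁻) ⋅ Kf (i s ⋅ (i s)⁻)).
    { apply HK3; auto. apply idem_rr. }
    assert (Kst : Kf ((i s ⋅ (i s)⁻) ⋅ (i t ⋅ (i t)⁻)) = (i s ⋅ (i s)⁻) ⋅ Kf (i t ⋅ (i t)⁻)).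
    { apply HK3; auto. apply idem_rr. }
    assert (Cst : (i t ⋅ (i t)⁻) ⋅ (i s ⋅ (i s)⁻) = (i s ⋅ (i s)⁻) ⋅ (i t ⋅ (i t)⁻)).
    { apply idem_comm; apply idem_rr. }
    split; [|split]; apply Hinj.
    + rewrite (ML_i Hst), !Hi, (ML_i Hs). rewrite rg_mul_A by apply i_inA. rewrite Kts.
      srw (central (HK1 Es) (idem_rr (i t))).
      srw (central (i_inA s) (idem_rr (i t))). srw (sinv_l (i t)). auto.
    + rewrite (MR_i Hst), !Hi, (MR_i Ht). rewrite rg_mul_A by apply i_inA. rewrite Cst, Kst.
      srw (eq_sym (central (i_inA t) (idem_rr (i s)))). srw (inA_rr (i_inA s)). auto.
    + rewrite !Hi, (ML_i Ht), (MR_i Hs).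
      transitivity (i s ⋅ (i s ⋅ (i s)⁻ ⋅ Kf (i t ⋅ (i t)⁻)) ⋅ i t).
      { srw (inA_rr (i_inA s)). auto. }
      rewrite <- Kst, <- Cst, Kts. srw (central (HK1 Es) (idem_rr (i t))).
      srw (sinv_l (i t)). auto.
Qed.
End Mult.

Section MUnit.
Variables (I : A -> Prop) (EI : U -> Prop) (Kf : U -> U).
Hypothesis HI : forall c, I c <-> EI (i c ⋅ (i c)⁻).
Hypothesis HEI : forall e f, EI e -> f ⋅ f = f -> EI (f ⋅ e).
Hypothesis HK1 : forall e, EI e -> inA (Kf e).
Hypothesis HK2 : forall e, EI e -> Kf e ⋅ (Kf e)⁻ = e.
Hypothesis HK3 : forall e f, EI e -> f ⋅ f = f -> Kf (f ⋅ e) = f ⋅ Kf e.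
Let Kf' e := (Kf e)⁻.
Lemma HK1' : forall e, EI e -> inA (Kf' e).
Proof. intros. apply inA_inv. auto. Qed.
Lemma HK2' : forall e, EI e -> Kf' e ⋅ (Kf' e)⁻ = e.
Proof. intros. unfold Kf'. rewrite inv_inv, <- cliff; auto. Qed.
Lemma HK3' : forall e f, EI e -> f ⋅ f = f -> Kf' (f ⋅ e) = f ⋅ Kf' e.
Proof.
  intros. unfold Kf'. rewrite HK3, inv_mul, (idem_inv H0); auto. symmetry. apply central; auto.
  apply inA_inv; auto.
Qed.
Lemma M_unit : is_unit_multiplier I (ML Kf) (MR Kf) (ML Kf') (MR Kf').
Proof.
  split. apply M_mult with EI; auto. split. apply M_mult with EI; auto using HK1', HK2', HK3'.
  intros s Hs. pose proof (proj1 (HI s) Hs) as Es.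
  assert (HL : I (ML Kf s)). { apply HI. rewrite (ML_rg HI HK1 HK2 Hs). auto. }
  assert (HR : I (MR Kf s)). { apply HI. rewrite (MR_rg HI HK1 HK2 Hs). auto. }
  assert (HL' : I (ML Kf' s)). { apply HI. rewrite (ML_rg HI HK1' HK2' Hs). auto. }
  assert (HR' : I (MR Kf' s)). { apply HI. rewrite (MR_rg HI HK1' HK2' Hs). auto. }
  split; [|split; [|split]]; apply Hinj.
  - rewrite (ML_i HI HK1 HL'), (ML_rg HI HK1' HK2' Hs), (ML_i HI HK1' Hs). unfold Kf'.
    srw (HK2 Es). srw (sinv_l (i s)). auto.
  - rewrite (MR_i HI HK1' HR), (MR_rg HI HK1 HK2 Hs), (MR_i HI HK1 Hs). unfold Kf'.
    srw (HK2 Es). srw (inA_rr (i_inA s)). auto.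
  - rewrite (ML_i HI HK1' HL), (ML_rg HI HK1 HK2 Hs), (ML_i HI HK1 Hs). unfold Kf'.
    srw (eq_sym (cliff (HK1 Es))). srw (HK2 Es). srw (sinv_l (i s)). auto.
  - rewrite (MR_i HI HK1 HR'), (MR_rg HI HK1' HK2' Hs), (MR_i HI HK1' Hs). unfold Kf'.
    srw (eq_sym (cliff (HK1 Es))). srw (HK2 Es). srw (inA_rr (i_inA s)). auto.
Qed.
End MUnit.

Definition Kw x y e := Nr x e ⋅ Nr y ((Nr x e)⁻ ⋅ Nr x e) ⋅ (Nr (x * y) e)⁻.

Section KwFacts.
Variables (x y : G) (e : U).
Hypothesis He1 : Er x e.
Hypothesis He2 : Er (x * y) e.
Lemma Er_y : Er y ((Nr x e)⁻ ⋅ Nr x e).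
Proof.
  destruct He2 as [w [Hw1 Hw2]]. exists ((Nr x e)⁻ ⋅ w). split.
  rewrite Hj, jinv, (Nr_j He1), Hw1, gmul_assoc, gmul_Vl, gmul_1l. auto.
  rewrite inv_mul, inv_inv. srw Hw2. srw (Nr_Pi He1). auto.
Qed.
Lemma rgPQ : Nr x e ⋅ Nr y ((Nr x e)⁻ ⋅ Nr x e) ⋅ (Nr x e ⋅ Nr y ((Nr x e)⁻ ⋅ Nr x e))⁻ = e.
Proof.
  rewrite inv_mul. srw (Nr_rg Er_y). srw (sinv_l (Nr x e)). apply (Nr_rg He1).
Qed.
Lemma R_eq : Nr (x * y) e = N (Nr x e ⋅ Nr y ((Nr x e)⁻ ⋅ Nr x e)).
Proof.
  apply NrE. rewrite Hj, (Nr_j He1), (Nr_j Er_y). auto. apply rgPQ.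
Qed.
Lemma dmPQ : (Nr x e ⋅ Nr y ((Nr x e)⁻ ⋅ Nr x e))⁻ ⋅ (Nr x e ⋅ Nr y ((Nr x e)⁻ ⋅ Nr x e)) =
  (Nr y ((Nr x e)⁻ ⋅ Nr x e))⁻ ⋅ Nr y ((Nr x e)⁻ ⋅ Nr x e).
Proof. rewrite inv_mul. srw (Nr_Pi Er_y). auto. Qed.
Lemma Kw_inA : inA (Kw x y e).
Proof.
  unfold inA, Kw. rewrite !Hj, jinv, (Nr_j He1), (Nr_j Er_y), (Nr_j He2), gmul_Vr. auto.
Qed.
Lemma Kw_rg : Kw x y e ⋅ (Kw x y e)⁻ = e.
Proof.
  unfold Kw. rewrite R_eq. rewrite !inv_mul, inv_inv. srw (Ndm (Nr x e ⋅ Nr y ((Nr x e)⁻ ⋅ Nr x e))).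
  rewrite inv_mul. srw (Nr_Pi Er_y). srw (sinv_l (Nr y ((Nr x e)⁻ ⋅ Nr x e))).
  srw (Nr_rg Er_y). srw (sinv_l (Nr x e)). apply (Nr_rg He1).
Qed.
Lemma Kw_left f : f ⋅ f = f -> Kw x y (f ⋅ e) = f ⋅ Kw x y e.
Proof.
  intro Hf. unfold Kw.
  rewrite (Nr_left He1 Hf eq_refl), (Nr_left He2 Hf eq_refl).
  assert (Eq : Nr y ((f ⋅ Nr x e)⁻ ⋅ (f ⋅ Nr x e)) = ((Nr x e)⁻ ⋅ f ⋅ Nr x e) ⋅ Nr y ((Nr x e)⁻ ⋅ Nr x e)).
  { apply Nr_left. apply Er_y.
    pose proof (conj_idem (Nr x e)⁻ Hf) as C. rewrite inv_inv in C. exact C.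
    rewrite inv_mul, (idem_inv Hf). srw Hf. srw (sinv_l (Nr x e)). auto. }
  rewrite Eq. rewrite inv_mul, (idem_inv Hf).
  srw (Nr_rg He1). srw (idem_comm (Er_idem He1) Hf). srw Hf. srw (Nr_P He1).
  pose proof (central Kw_inA Hf) as C. unfold Kw in C.
  transitivity (f ⋅ (Nr x e ⋅ Nr y ((Nr x e)⁻ ⋅ Nr x e) ⋅ (Nr (x * y) e)⁻ ⋅ f)). aeq.
  rewrite <- C. srw Hf. auto.
Qed.
Lemma dmR : (Nr (x * y) e)⁻ ⋅ Nr (x * y) e = (Nr y ((Nr x e)⁻ ⋅ Nr x e))⁻ ⋅ Nr y ((Nr x e)⁻ ⋅ Nr x e).
Proof. rewrite R_eq, Ndm. apply dmPQ. Qed.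
End KwFacts.

Definition EI2 x y e := Er x e /\ Er (x * y) e.
Lemma HI2 x y c : setprod (DD x) (DD (x * y)) c <-> EI2 x y (i c ⋅ (i c)⁻).
Proof. rewrite setprod_D. unfold DD, EI2. tauto. Qed.
Lemma HEI2 x y e f : EI2 x y e -> f ⋅ f = f -> EI2 x y (f ⋅ e).
Proof. intros [H1 H2] Hf. split; apply Er_down; auto. Qed.

Definition cwL x y := ML (Kw x y).
Definition cwR x y := MR (Kw x y).
Definition cwiL x y := ML (fun e => (Kw x y e)⁻).
Definition cwiR x y := MR (fun e => (Kw x y e)⁻).

Lemma Lw_unit x y : is_unit_multiplier (setprod (DD x) (DD (x * y))) (cwL x y) (cwR x y) (cwiL x y) (cwiR x y).
Proof.
  apply M_unit with (EI := EI2 x y).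
  - apply HI2.
  - apply HEI2.
  - intros e [H1 H2]. apply Kw_inA; auto.
  - intros e [H1 H2]. apply Kw_rg; auto.
  - intros e f [H1 H2] Hf. apply Kw_left; auto.
Qed.

Lemma Nr_one e : e ⋅ e = e -> Nr 1 e = e.
Proof.
  intro He. rewrite (NrE (u := e)). apply N_idem; auto. apply idem_inA; auto.
  rewrite (idem_inv He); auto.
Qed.

Lemma Lw_1x x a : DD x a -> cwL 1 x a = a /\ cwR 1 x a = a.
Proof.
  intro Ha.
  assert (E : Kw 1 x (i a ⋅ (i a)⁻) = i a ⋅ (i a)⁻).
  { unfold Kw. rewrite (Nr_one (idem_rr (i a))). rewrite (idem_inv (idem_rr (i a))), (idem_rr (i a)).
    rewrite gmul_1l. srw (Nr_P Ha). apply (Nr_rg Ha). }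
  unfold cwL, cwR, ML, MR. rewrite E. srw (sinv_l (i a)). srw (inA_rr (i_inA a)). rewrite iinv_i. auto.
Qed.

Lemma Lw_x1 x a : DD x a -> cwL x 1 a = a /\ cwR x 1 a = a.
Proof.
  intro Ha.
  assert (E : Kw x 1 (i a ⋅ (i a)⁻) = i a ⋅ (i a)⁻).
  { unfold Kw. rewrite (Nr_one (idem_ll (Nr x (i a ⋅ (i a)⁻)))). rewrite gmul_1r.
    srw (sinv_l (Nr x (i a ⋅ (i a)⁻))). apply (Nr_rg Ha). }
  unfold cwL, cwR, ML, MR. rewrite E. srw (sinv_l (i a)). srw (inA_rr (i_inA a)). rewrite iinv_i. auto.
Qed.

Lemma gxy_y (x y : G) : (x * y) * ginv y = x.
Proof. rewrite <- gmul_assoc, gmul_Vr, gmul_1r. auto. Qed.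

Lemma Ltheta_comp x y s : setprod (DD (ginv y)) (DD (ginv y * ginv x)) s ->
  th x (th y s) = cwiR x y (cwL x y (th (x * y) s)).
Proof.
  rewrite setprod_D. intros [Hy Hxy].
  pose proof (proj1 (D_inv y s) Hy) as HEy.
  assert (HExy : Ed (x * y) (i s ⋅ (i s)⁻)).
  { apply D_inv. rewrite ginv_mul. exact Hxy. }
  assert (Hxy' : DD (ginv (x * y)) s) by (rewrite ginv_mul; exact Hxy).
  set (B := Nd y (i s ⋅ (i s)⁻)).
  set (C := Nd (x * y) (i s ⋅ (i s)⁻)).
  assert (FB1 : j B = y) by apply (Nd_j HEy).
  assert (FB2 : B⁻ ⋅ B = i s ⋅ (i s)⁻) by apply (Nd_dm HEy).
  assert (FB3 : N B = B) by apply (Nd_N HEy).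
  assert (FB4 : B ⋅ (i s ⋅ (i s)⁻) = B) by apply (Nd_P HEy).
  assert (FC1 : j C = x * y) by apply (Nd_j HExy).
  assert (FC2 : C⁻ ⋅ C = i s ⋅ (i s)⁻) by apply (Nd_dm HExy).
  assert (FC3 : N C = C) by apply (Nd_N HExy).
  assert (FC4 : C ⋅ (i s ⋅ (i s)⁻) = C) by apply (Nd_P HExy).
  assert (jCB : j (C ⋅ B⁻) = x) by (rewrite Hj, jinv, FC1, FB1; apply gxy_y).
  assert (rgCB : C ⋅ B⁻ ⋅ (C ⋅ B⁻)⁻ = C ⋅ C⁻).
  { rewrite inv_mul, inv_inv. srw FB2. srw FC4. auto. }
  assert (dmCB : (C ⋅ B⁻)⁻ ⋅ (C ⋅ B⁻) = B ⋅ B⁻).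
  { rewrite inv_mul, inv_inv. srw FC2. srw FB4. auto. }
  assert (HEx : Ed x (B ⋅ B⁻)) by (exists (C ⋅ B⁻); auto).
  set (A' := Nd x (B ⋅ B⁻)).
  assert (FA : A' = N (C ⋅ B⁻)) by (apply NdE; auto).
  assert (FP : Nr x (C ⋅ C⁻) = A') by (rewrite FA; apply NrE; auto).
  assert (FA2 : A'⁻ ⋅ A' = B ⋅ B⁻) by apply (Nd_dm HEx).
  assert (FQ : Nr y (B ⋅ B⁻) = B) by (transitivity (N B); [apply NrE; auto | exact FB3]).
  assert (FR : Nr (x * y) (C ⋅ C⁻) = C) by (transitivity (N C); [apply NrE; auto | exact FC3]).
  assert (EIe : EI2 x y (C ⋅ C⁻)).
  { split. exists (C ⋅ B⁻); auto. exists C; auto. }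
  assert (Ht : setprod (DD x) (DD (x * y)) (th (x * y) s)).
  { apply HI2. rewrite (theta_rg Hxy'). fold C. auto. }
  assert (HKi1 : forall e, EI2 x y e -> inA (Kw x y e)) by (intros e [H1 H2]; apply Kw_inA; auto).
  assert (HKi2 : forall e, EI2 x y e -> Kw x y e ⋅ (Kw x y e)⁻ = e) by (intros e [H1 H2]; apply Kw_rg; auto).
  assert (HKi1' : forall e, EI2 x y e -> inA ((fun e => (Kw x y e)⁻) e)) by (intros; apply inA_inv; auto).
  assert (HIw : setprod (DD x) (DD (x * y)) (cwL x y (th (x * y) s))).
  { apply HI2. unfold cwL. rewrite (ML_rg (HI2 x y) HKi1 HKi2 Ht). apply HI2. auto. }
  apply Hinj. unfold cwiR. rewrite (MR_i (HI2 x y) HKi1' HIw).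
  unfold cwL. rewrite (ML_rg (HI2 x y) HKi1 HKi2 Ht).
  rewrite (ML_i (HI2 x y) HKi1 Ht).
  rewrite (theta_rg Hxy'), (theta_i (x * y) s). fold C.
  unfold Kw. rewrite FP, FA2, FQ, FR.
  rewrite (theta_i x (th y s)), (theta_rg Hy), (theta_i y s). fold B. fold A'.
  rewrite !inv_mul, !inv_inv. srw FC2. srw FC2.
  srw (sinv_l (i s)). srw (inA_rr (i_inA s)). auto.
Qed.

Lemma HKi1g x y : forall e, EI2 x y e -> inA (Kw x y e).
Proof. intros e [H1 H2]; apply Kw_inA; auto. Qed.
Lemma HKi2g x y : forall e, EI2 x y e -> Kw x y e ⋅ (Kw x y e)⁻ = e.
Proof. intros e [H1 H2]; apply Kw_rg; auto. Qed.

Lemma wR_i x y c : setprod (DD x) (DD (x * y)) c -> i (cwR x y c) = i c ⋅ Kw x y (i c ⋅ (i c)⁻).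
Proof. intro H. apply (MR_i (HI2 x y) (@HKi1g x y) H). Qed.
Lemma wR_rg x y c : setprod (DD x) (DD (x * y)) c -> i (cwR x y c) ⋅ (i (cwR x y c))⁻ = i c ⋅ (i c)⁻.
Proof. intro H. apply (MR_rg (HI2 x y) (@HKi1g x y) (@HKi2g x y) H). Qed.

Lemma setprod3 u v w c : setprod (setprod (DD u) (DD v)) (DD w) c <-> DD u c /\ DD v c /\ DD w c.
Proof.
  split.
  - intros [a [b [Ha [Hb ->]]]]. apply setprod_D in Ha. destruct Ha as [H1 H2].
    split; [|split]. apply D_ideal_l; auto. apply D_ideal_l; auto. apply D_ideal_r; auto.
  - intros [H1 [H2 H3]]. exists c, (c⁻ ⋅ c). split. apply setprod_D; auto. split. apply D_ideal_r. auto.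
    rewrite smul_assoc. symmetry. apply sinv_l.
Qed.

Lemma cocycle_pf x y z s : setprod (setprod (DD (ginv x)) (DD y)) (DD (y * z)) s ->
  cwR x (y * z) (th x (cwR y z s)) = cwR (x * y) z (cwR x y (th x s)).
Proof.
  rewrite setprod3. intros [Hx [Hy Hyz]].
  pose proof (proj1 (D_inv x s) Hx) as HEx.
  assert (EIyz : EI2 y z (i s ⋅ (i s)⁻)) by (split; auto).
  assert (Isyz : setprod (DD y) (DD (y * z)) s) by (apply HI2; auto).
  assert (Hw : DD (ginv x) (cwR y z s)).
  { unfold DD. unfold cwR. rewrite (MR_rg (HI2 y z) (@HKi1g y z) (@HKi2g y z) Isyz). auto. }
  set (Ax := Nd x (i s ⋅ (i s)⁻)).
  set (Y := Nr y (i s ⋅ (i s)⁻)).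
  set (W1 := Nr (y * z) (i s ⋅ (i s)⁻)).
  assert (FA1 : j Ax = x) by apply (Nd_j HEx).
  assert (FA2 : Ax⁻ ⋅ Ax = i s ⋅ (i s)⁻) by apply (Nd_dm HEx).
  assert (FA3 : N Ax = Ax) by apply (Nd_N HEx).
  assert (FA4 : Ax ⋅ (i s ⋅ (i s)⁻) = Ax) by apply (Nd_P HEx).
  assert (FY1 : j Y = y) by apply (Nr_j Hy).
  assert (FY2 : Y ⋅ Y⁻ = i s ⋅ (i s)⁻) by apply (Nr_rg Hy).
  assert (FW1 : j W1 = y * z) by apply (Nr_j Hyz).
  assert (FW2 : W1 ⋅ W1⁻ = i s ⋅ (i s)⁻) by apply (Nr_rg Hyz).
  assert (FW3 : W1⁻ ⋅ (i s ⋅ (i s)⁻) = W1⁻) by apply (Nr_Pi Hyz).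
  assert (E1 : Er x (Ax ⋅ Ax⁻)) by (rewrite <- FA1; apply Er_of).
  assert (E2 : Er (x * y) (Ax ⋅ Ax⁻)).
  { exists (Ax ⋅ Y). split. rewrite Hj, FA1, FY1; auto. rewrite inv_mul. srw FY2. srw FA4. auto. }
  assert (E3 : Er (x * (y * z)) (Ax ⋅ Ax⁻)).
  { exists (Ax ⋅ W1). split. rewrite Hj, FA1, FW1; auto. rewrite inv_mul. srw FW2. srw FA4. auto. }
  assert (E3' : Er (x * y * z) (Ax ⋅ Ax⁻)) by (rewrite <- gmul_assoc; auto).
  assert (FP : Nr x (Ax ⋅ Ax⁻) = Ax) by (transitivity (N Ax); [apply NrE; auto | exact FA3]).
  pose proof (dmR E1 E2) as dR3. rewrite FP, FA2 in dR3. fold Y in dR3.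
  pose proof (dmR Hy Hyz) as dW1. fold Y W1 in dW1.
  assert (I1 : setprod (DD x) (DD (x * (y * z))) (th x (cwR y z s))).
  { apply HI2. rewrite (theta_rg Hw). unfold cwR. rewrite (MR_rg (HI2 y z) (@HKi1g y z) (@HKi2g y z) Isyz).
    fold Ax. split; auto. }
  assert (I2 : setprod (DD x) (DD (x * y)) (th x s)).
  { apply HI2. rewrite (theta_rg Hx). fold Ax. split; auto. }
  assert (I3 : setprod (DD (x * y)) (DD (x * y * z)) (cwR x y (th x s))).
  { apply HI2. unfold cwR. rewrite (MR_rg (HI2 x y) (@HKi1g x y) (@HKi2g x y) I2).
    rewrite (theta_rg Hx). fold Ax. split; auto. }
  apply Hinj.
  rewrite (wR_i I1), (wR_i I3), (wR_rg I2), (wR_i I2).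
  rewrite (theta_rg Hw), (theta_rg Hx), (theta_i x (cwR y z s)), (theta_i x s).
  rewrite (wR_rg Isyz), (wR_i Isyz).
  fold Ax. unfold Kw. rewrite FP, FA2. fold Y W1. rewrite <- gmul_assoc.
  rewrite dR3. repeat srw dR3. repeat srw FA2. srw FW3. srw dW1. srw (sinv_l (Nr z (Y⁻ ⋅ Y))).
  srw (sinv_l Y). repeat srw (inA_rr (i_inA s)). auto.
Qed.

Hypothesis Hjs : surjective j.

Lemma NuPi u : u⁻ ⋅ u ⋅ (N u)⁻ = (N u)⁻.
Proof. rewrite <- Ndm. apply sinv_r. Qed.
Lemma NuPi' u : (N u)⁻ ⋅ (u ⋅ u⁻) = (N u)⁻.
Proof. rewrite <- Nrg. rewrite smul_assoc. apply sinv_r. Qed.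

Definition mu (u : U) : A * G := (iinv (u ⋅ (N u)⁻), j u).

Lemma mu_inA u : inA (u ⋅ (N u)⁻).
Proof. unfold inA. rewrite Hj, jinv, jN, gmul_Vr. auto. Qed.
Lemma mu_i u : i (iinv (u ⋅ (N u)⁻)) = u ⋅ (N u)⁻.
Proof. apply iinvK, mu_inA. Qed.
Lemma mu_rg u : u ⋅ (N u)⁻ ⋅ (u ⋅ (N u)⁻)⁻ = u ⋅ u⁻.
Proof. rewrite inv_mul, inv_inv. srw (Ndm u). srw (sinv_l u). auto. Qed.
Lemma mu_back u : u ⋅ (N u)⁻ ⋅ N u = u.
Proof. srw (Ndm u). apply sinv_l. Qed.

Lemma mu_D u : DD (j u) (fst (mu u)).
Proof. unfold DD, mu. simpl. rewrite mu_i, mu_rg. apply Er_of. Qed.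

Lemma mu_inj : injective mu.
Proof.
  intros u v H. unfold mu in H. injection H as H1 H2.
  assert (E : u ⋅ (N u)⁻ = v ⋅ (N v)⁻) by (rewrite <- mu_i, H1, mu_i; auto).
  assert (R : u ⋅ u⁻ = v ⋅ v⁻) by (rewrite <- mu_rg, E, mu_rg; auto).
  rewrite <- (mu_back u), <- (mu_back v), E, (NeqR H2 R). auto.
Qed.

Lemma mu_onto a x : DD x a -> mu (i a ⋅ Nr x (i a ⋅ (i a)⁻)) = (a, x).
Proof.
  intro Ha. unfold mu.
  assert (J : j (i a ⋅ Nr x (i a ⋅ (i a)⁻)) = x) by (rewrite Hj, (i_inA a), (Nr_j Ha), gmul_1l; auto).
  assert (E : N (i a ⋅ Nr x (i a ⋅ (i a)⁻)) = Nr x (i a ⋅ (i a)⁻)).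
  { symmetry. apply NrE; auto. rewrite inv_mul. srw (Nr_rg Ha). srw (inA_rr (i_inA a)). auto. }
  rewrite J, E. srw (Nr_rg Ha). srw (inA_rr (i_inA a)). rewrite iinv_i. auto.
Qed.

Lemma mu_ia a : mu (i a) = (a, 1).
Proof.
  unfold mu. rewrite (i_inA a).
  assert (E : N (i a) = i a ⋅ (i a)⁻).
  { rewrite <- (N_idem (idem_rr (i a))). apply NeqR. rewrite (i_inA a). symmetry. apply idem_inA, idem_rr.
    rewrite (idem_inv (idem_rr (i a))), (idem_rr (i a)). auto. }
  rewrite E. rewrite (idem_inv (idem_rr (i a))). srw (inA_rr (i_inA a)). rewrite iinv_i. auto.
Qed.


Lemma mu_mul u v :
  iinv (u ⋅ v ⋅ (N (u ⋅ v))⁻) =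
  cwR (j u) (j v) (th (j u) (thinv (j u) (iinv (u ⋅ (N u)⁻)) ⋅ iinv (v ⋅ (N v)⁻))).
Proof.
  set (a := iinv (u ⋅ (N u)⁻)). set (b := iinv (v ⋅ (N v)⁻)).
  assert (Ia : i a = u ⋅ (N u)⁻) by apply mu_i.
  assert (Ib : i b = v ⋅ (N v)⁻) by apply mu_i.
  assert (Ha : DD (j u) a) by apply (mu_D u).
  assert (rga : i a ⋅ (i a)⁻ = u ⋅ u⁻) by (rewrite Ia; apply mu_rg).
  assert (Tc : i (thinv (j u) a) = (N u)⁻ ⋅ u).
  { rewrite (thetainv_i (j u) a). rewrite rga, NrE', Ia. srw (Ndm u). srw (sinv_l u). auto. }
  assert (Hcb : DD (ginv (j u)) (thinv (j u) a ⋅ b)) by (apply D_ideal_l, thetainv_D, Ha).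
  set (X := (N u)⁻ ⋅ u ⋅ (v ⋅ (N v)⁻)).
  assert (IX : i (thinv (j u) a ⋅ b) = X) by (rewrite Hi, Tc, Ib; auto).
  assert (XinA : inA X) by (rewrite <- IX; apply i_inA).
  assert (Xeq : X ⋅ X⁻ = u⁻ ⋅ u ⋅ (X ⋅ X⁻)).
  { unfold X. rewrite !inv_mul, !inv_inv. srw (NuPi u). auto. }
  assert (NdX : Nd (j u) (X ⋅ X⁻) = N u ⋅ (X ⋅ X⁻)).
  { rewrite <- (NdE' u). apply Nd_right. apply Ed_of. apply idem_rr. exact Xeq. }
  assert (Tt : i (th (j u) (thinv (j u) a ⋅ b)) = u ⋅ v ⋅ (N v)⁻ ⋅ (N u)⁻).
  { rewrite (theta_i (j u)), IX, NdX. rewrite inv_mul, (idem_inv (idem_rr X)).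
    srw (sinv_l X). srw (inA_rr XinA). unfold X. srw (Nrg u). srw (sinv_l u). auto. }
  assert (Cv : inA (v ⋅ (N v)⁻)) by apply mu_inA.
  assert (CC : forall p, p ⋅ v ⋅ (N v)⁻ ⋅ u⁻ ⋅ u = p ⋅ (u⁻ ⋅ u) ⋅ v ⋅ (N v)⁻).
  { intro p. pose proof (central Cv (idem_ll u)) as C.
    transitivity (p ⋅ (v ⋅ (N v)⁻ ⋅ (u⁻ ⋅ u))). aeq. rewrite <- C. aeq. }
  assert (rgt : i (th (j u) (thinv (j u) a ⋅ b)) ⋅ (i (th (j u) (thinv (j u) a ⋅ b)))⁻ = u ⋅ v ⋅ (u ⋅ v)⁻).
  { rewrite Tt. rewrite !inv_mul, !inv_inv. srw (Ndm u). rewrite CC. srw (sinv_l u). srw (Ndm v). srw (sinv_l v). auto. }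
  assert (Juv : j (u ⋅ v) = j u * j v) by apply Hj.
  assert (E1 : Er (j u) (u ⋅ v ⋅ (u ⋅ v)⁻)).
  { exists (u ⋅ (v ⋅ v⁻)). split. rewrite Hj, (idem_inA (idem_rr v)), gmul_1r. auto.
    rewrite !inv_mul, !inv_inv. srw (sinv_l v). auto. }
  assert (E2 : Er (j u * j v) (u ⋅ v ⋅ (u ⋅ v)⁻)) by (rewrite <- Juv; apply Er_of).
  assert (It : setprod (DD (j u)) (DD (j u * j v)) (th (j u) (thinv (j u) a ⋅ b))).
  { apply HI2. rewrite rgt. split; auto. }
  apply Hinj. rewrite (wR_i It), rgt, Tt, mu_i. unfold Kw.
  assert (P1 : Nr (j u) (u ⋅ v ⋅ (u ⋅ v)⁻) = N u ⋅ (v ⋅ v⁻)).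
  { rewrite <- N_right by apply idem_rr. apply NrE. rewrite Hj, (idem_inA (idem_rr v)), gmul_1r. auto.
    rewrite !inv_mul, !inv_inv. srw (sinv_l v). auto. }
  assert (P2 : Nr (j v) ((N u ⋅ (v ⋅ v⁻))⁻ ⋅ (N u ⋅ (v ⋅ v⁻))) = u⁻ ⋅ u ⋅ N v).
  { rewrite <- N_left by apply idem_ll. apply NrE. rewrite Hj, (idem_inA (idem_ll u)), gmul_1l. auto.
    rewrite !inv_mul, !inv_inv. srw (Ndm u). repeat srw (idem_comm (idem_rr v) (idem_ll u)). repeat srw (idem_rr v). repeat srw (idem_ll u). auto. }
  assert (P3 : Nr (j u * j v) (u ⋅ v ⋅ (u ⋅ v)⁻) = N (u ⋅ v)) by (rewrite <- Juv; apply NrE'; auto).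
  rewrite P1, P2, P3.
  srw (Ndm u). rewrite CC. srw (sinv_l u). srw (NuPi' v). rewrite CC. srw (sinv_l u).
  srw (Ndm v). srw (sinv_l v). auto.
Qed.

Definition Th : TwistedPartialAction G A.
Proof.
  refine {| Defs.D := DD; Defs.theta := th; Defs.thetainv := thinv;
            Defs.wL := cwL; Defs.wR := cwR; Defs.wiL := cwiL; Defs.wiR := cwiR |}.
  - intro x. split.
    + destruct (Hjs x) as [u Hu]. destruct (inA_ex (idem_inA (idem_rr u))) as [a Ha].
      exists a. unfold DD. rewrite <- Ha, (idem_inv (idem_rr u)), (idem_rr u), <- Hu. apply Er_of.
    + intros a b H. split. apply D_ideal_l; auto. apply D_ideal_r; auto.
  - intros x c. rewrite setprod_D. tauto.
  - intros x y c. rewrite !setprod_D. tauto.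
  - apply D_one.
  - apply Ltheta_one.
  - intros x a H. apply theta_D; auto.
  - intros x a H. apply thetainv_D; auto.
  - intros x a H. apply thetainv_theta; auto.
  - intros x a H. apply theta_thetainv; auto.
  - intros x a b H1 H2. apply Ltheta_mul; auto.
  - intros x y c. split.
    + intros [a [H ->]]. apply theta_img1; auto.
    + intro H. apply theta_img2; auto.
  - apply Lw_unit.
  - apply Ltheta_comp.
  - apply Lw_1x.
  - apply Lw_x1.
  - apply cocycle_pf.
Defined.

Lemma main_constr : exists Th : TwistedPartialAction G A, equivalent_to_crossed_product i j Th.
Proof.
  exists Th. exists mu. split; [apply mu_inj|split; [|split; [|split]]].
  - intros [a x]. split.
    + intros [u <-]. apply mu_D.
    + intro H. exists (i a ⋅ Nr x (i a ⋅ (i a)⁻)). apply mu_onto. exact H.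
  - intros u v. unfold cp_mul, mu. simpl. rewrite Hj. f_equal. apply mu_mul.
  - apply mu_ia.
  - intro u. auto.
Qed.

End Main.


Theorem theorem6p12 :
  forall (A U : InvSemigroup) (G : Group) (i : A -> U) (j : U -> G),
    semilattice_of_groups A ->
    is_group_extension i j ->
    admissible i j ->
    exists Th : TwistedPartialAction G A,
      equivalent_to_crossed_product i j Th.
Proof.
  intros A U G i j HA [[Hi Hinj] [[Hj Hjs] HiA]]
    [S [pi [kappa [[_ [[Hpi [_ Hsep]] HpiA]] [[Hk _] [Hjk [rho [Hr1 [Hr2 Hr3]]]]]]]]].
  destruct (Hjs (gone G)) as [u Hu]. destruct (proj2 (HiA u) Hu) as [a0 _].
  eapply (@main_constr A U S G i j pi kappa rho a0); eauto.
Qed.
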